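(* Let $W$ be a nonempty closed subset of $\mathbb{R}$, let $\alpha,\beta\in\mathrm{Aut}(W)$, $a\in\mathrm{Fix}_W(\alpha)$, $b\in\mathrm{Fix}_W(\beta)$. Suppose $a<b$, $\mathrm{Fix}_W(\alpha)\cap(a,b]=\emptyset$ and $\mathrm{Fix}_W(\beta)\cap[a,b)=\emptyset$. Then $\langle\alpha,\beta\rangle$ contains a nonabelian free subsemigroup.
   Context: $\mathrm{Aut}(W)$ is the group of order preserving bijections of $W$ (with the order induced from $\mathbb{R}$). $\mathrm{Fix}_W(g)$ is the set of points of $W$ fixed by $g$. *)

(* Defs.v *)
From Stdlib Require Import Reals Rtopology List.
Open Scope R_scope.

Definition pt (W : R -> Prop) : Type := {x : R | W x}.

Definition is_aut (W : R -> Prop) (f : pt W -> pt W) : Prop :=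
  (exists g : pt W -> pt W, (forall x, g (f x) = x) /\ (forall y, f (g y) = y)) /\
  (forall x y : pt W, proj1_sig x <= proj1_sig y -> proj1_sig (f x) <= proj1_sig (f y)).

Inductive gen2 {T : Type} (f g : T -> T) : (T -> T) -> Prop :=
| gen2_id : gen2 f g (fun x => x)
| gen2_f : gen2 f g f
| gen2_g : gen2 f g g
| gen2_inv : forall h k, gen2 f g h ->
    (forall x, k (h x) = x) -> (forall y, h (k y) = y) -> gen2 f g k
| gen2_comp : forall h k, gen2 f g h -> gen2 f g k -> gen2 f g (fun x => h (k x)).

Fixpoint eval_word {T : Type} (u v : T -> T) (w : list bool) : T -> T :=
  match w with
  | nil => fun x => x
  | b :: w' => fun x => (if b then v else u) (eval_word u v w' x)
  end.

Definition free_semigroup2 {T : Type} (u v : T -> T) : Prop :=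
  forall w1 w2 : list bool, w1 <> nil -> w2 <> nil ->
    eval_word u v w1 = eval_word u v w2 -> w1 = w2.

Definition contains_nonabelian_free_subsemigroup {T : Type} (G : (T -> T) -> Prop) : Prop :=
  exists u v, G u /\ G v /\ free_semigroup2 u v.

(* Main.v *)
Require Import Defs.
From Stdlib Require Import Reals Rtopology List Lra Classical ProofIrrelevance.
Open Scope R_scope.

Notation val := (@proj1_sig R _).

Lemma pt_eq (W : R -> Prop) (x y : pt W) : val x = val y -> x = y.
Proof. destruct x as [x Hx], y as [y Hy]; simpl; intro E; subst; f_equal; apply proof_irrelevance. Qed.

Definition mono (W : R -> Prop) (f : pt W -> pt W) :=
  forall x y : pt W, val x <= val y -> val (f x) <= val (f y).

Lemma mono_strict W (f : pt W -> pt W) : mono W f -> (forall x y, f x = f y -> x = y) ->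
  forall x y, val x < val y -> val (f x) < val (f y).
Proof.
  intros Hm Hi x y Hxy. destruct (Rle_lt_or_eq_dec _ _ (Hm x y (Rlt_le _ _ Hxy))) as [H|H]; auto.
  apply pt_eq, Hi in H. subst; lra.
Qed.

Lemma inv_mono W (f h : pt W -> pt W) : mono W f -> (forall x, h (f x) = x) -> (forall y, f (h y) = y) -> mono W h.
Proof.
  intros Hm H1 H2 x y Hxy. destruct (Rle_or_lt (val (h x)) (val (h y))) as [H|H]; auto.
  exfalso. assert (Hy := Hm _ _ (Rlt_le _ _ H)). rewrite !H2 in Hy.
  assert (x = y) by (apply pt_eq; lra). subst; lra.
Qed.

Fixpoint pw {T : Type} (f : T -> T) (n : nat) : T -> T :=
  match n with O => fun x => x | S n => fun x => f (pw f n x) end.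

Lemma pw_gen2 {T} (al be f : T -> T) n : gen2 al be f -> gen2 al be (pw f n).
Proof. intro Hf; induction n; simpl. apply gen2_id. exact (gen2_comp _ _ _ _ Hf IHn). Qed.

Lemma pw_inj {T} (f : T -> T) n : (forall x y, f x = f y -> x = y) -> forall x y, pw f n x = pw f n y -> x = y.
Proof. intro Hi; induction n; simpl; auto. Qed.

Lemma pw_mono W (f : pt W -> pt W) n : mono W f -> mono W (pw f n).
Proof. intros Hm; induction n; intros x y H; simpl; auto. Qed.

Lemma pw_fix {T} (f : T -> T) a n : f a = a -> pw f n a = a.
Proof. intro H; induction n; simpl; auto; rewrite IHn; auto. Qed.

Lemma pingpong {T} (P : T -> Prop) (u v : T -> T) (x0 : T) :
  (forall x y, u x = u y -> x = y) -> (forall x y, v x = v y -> x = y) -> P x0 ->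
  (forall x, P x -> P (u x)) -> (forall x, P x -> P (v x)) ->
  (forall x y, P x -> P y -> u x <> v y) -> free_semigroup2 u v.
Proof.
  intros Hu Hv H0 Pu Pv Hd.
  assert (HP : forall w x, P x -> P (eval_word u v w x)).
  { induction w as [|c w IH]; simpl; auto. intros x Hx; destruct c; auto. }
  assert (K : forall w1 w2, (forall x, eval_word u v w1 x = eval_word u v w2 x) -> w1 = w2).
  { induction w1 as [|c w1 IH]; intros [|d w2] E; simpl in E; auto.
    - exfalso. destruct d.
      + specialize (E (u x0)). exact (Hd x0 _ H0 (HP _ _ (Pu _ H0)) E).
      + specialize (E (v x0)). symmetry in E. exact (Hd _ x0 (HP _ _ (Pv _ H0)) H0 E).
    - exfalso. destruct c.
      + specialize (E (u x0)). symmetry in E. exact (Hd x0 _ H0 (HP _ _ (Pu _ H0)) E).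
      + specialize (E (v x0)). exact (Hd _ x0 (HP _ _ (Pv _ H0)) H0 E).
    - destruct c, d.
      + f_equal; apply IH; intro x; apply Hv, E.
      + exfalso; specialize (E x0); symmetry in E; exact (Hd _ _ (HP _ _ H0) (HP _ _ H0) E).
      + exfalso; specialize (E x0); exact (Hd _ _ (HP _ _ H0) (HP _ _ H0) E).
      + f_equal; apply IH; intro x; apply Hu, E. }
  intros w1 w2 _ _ E. apply K; intro x; rewrite E; auto.
Qed.

Lemma exists_n (W : R -> Prop) (HWc : closed_set W) (f h : pt W -> pt W) (a b : pt W)
  (Hm : mono W f) (H1 : forall x, h (f x) = x) (H2 : forall y, f (h y) = y)
  (Hab : val a < val b) (Hfa : f a = a) (Hfb : val (f b) < val b)
  (HA : forall x : pt W, val a < val x <= val b -> f x <> x)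
  (c : R) (Hc : val a < c) : exists n, val (pw f n b) < c.
Proof.
  assert (Hfi : forall x y, f x = f y -> x = y) by (intros x y E; rewrite <- (H1 x), <- (H1 y), E; auto).
  assert (Hhi : forall x y, h x = h y -> x = y) by (intros x y E; rewrite <- (H2 x), <- (H2 y), E; auto).
  assert (Hhm := inv_mono W f h Hm H1 H2).
  assert (Hfs := mono_strict W f Hm Hfi).
  assert (Hhs := mono_strict W h Hhm Hhi).
  set (E := fun r => forall n, r <= val (pw f n b)).
  assert (Ea : E (val a)).
  { intro n. rewrite <- (pw_fix f a n Hfa) at 1. apply (pw_mono W f n Hm); lra. }
  destruct (completeness E) as [L [HL1 HL2]].
  { exists (val b). intros r Er. exact (Er O). }
  { exists (val a); exact Ea. }
  assert (Llow : forall n, L <= val (pw f n b)).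
  { intro n; apply HL2; intros r Er; apply Er. }
  assert (Lmax : forall r, E r -> r <= L) by (intros; apply HL1; auto).
  assert (approx : forall c, L < c -> exists n, val (pw f n b) < c).
  { intros c0 Hc0. apply NNPP; intro N.
    assert (E c0) by (intro n; apply Rnot_lt_le; intro; apply N; exists n; auto).
    specialize (Lmax _ H); lra. }
  apply approx.
  assert (aL : val a <= L) by auto.
  assert (Lb : L <= val b) by apply (Llow O).
  destruct (Rle_lt_or_eq_dec _ _ aL) as [lt|eq]; [|lra].
  exfalso.
  assert (WL : W L).
  { apply NNPP; intro NW. destruct (HWc L NW) as [del Hdel].
    destruct (approx (L + del)) as [n Hn]. { destruct del; simpl; lra. }
    apply (Hdel (val (pw f n b))). 
    - unfold disc. specialize (Llow n). rewrite Rabs_right; lra.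
    - apply proj2_sig. }
  set (lp := exist W L WL : pt W).
  assert (Hne : f lp <> lp) by (apply HA; simpl; lra).
  destruct (total_order_T (val (f lp)) L) as [[l|e]|g].
  - assert (Hh : L < val (h lp)).
    { assert (K := Hhs (f lp) lp l). rewrite H1 in K. exact K. }
    destruct (approx _ Hh) as [n Hn].
    assert (K := Hfs _ _ Hn). rewrite H2 in K. simpl in K.
    specialize (Llow (S n)). simpl in Llow. lra.
  - apply Hne, pt_eq; exact e.
  - assert (E (val (f lp))).
    { intros [|k]; simpl.
      + assert (K := Hm lp b Lb). lra.
      + apply Hm. apply Llow. }
    specialize (Lmax _ H); lra.
Qed.

Lemma pw_le_b W (f : pt W -> pt W) b n : mono W f -> val (f b) < val b -> val (pw f n b) <= val b.
Proof.
  intros Hm Hb; induction n; simpl. lra.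
  assert (K := Hm _ _ IHn). lra.
Qed.

Theorem lemma4p3 (W : R -> Prop) (HWne : exists x, W x) (HWc : closed_set W)
  (alpha beta : pt W -> pt W) (Ha : is_aut W alpha) (Hb : is_aut W beta)
  (a b : pt W) (Hfa : alpha a = a) (Hfb : beta b = b)
  (Hab : proj1_sig a < proj1_sig b)
  (HA : forall x : pt W, proj1_sig a < proj1_sig x <= proj1_sig b -> alpha x <> x)
  (HB : forall x : pt W, proj1_sig a <= proj1_sig x < proj1_sig b -> beta x <> x) :
  contains_nonabelian_free_subsemigroup (gen2 alpha beta).
Proof.
  destruct Ha as [[ai [Ha1 Ha2]] Ham].
  destruct Hb as [[bi [Hb1 Hb2]] Hbm].
  assert (Haim := inv_mono W alpha ai Ham Ha1 Ha2).
  assert (Hbim := inv_mono W beta bi Hbm Hb1 Hb2).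
  assert (Hai : forall x y, alpha x = alpha y -> x = y) by (intros x y E; rewrite <- (Ha1 x), <- (Ha1 y), E; auto).
  assert (Haii : forall x y, ai x = ai y -> x = y) by (intros x y E; rewrite <- (Ha2 x), <- (Ha2 y), E; auto).
  assert (Hbi : forall x y, beta x = beta y -> x = y) by (intros x y E; rewrite <- (Hb1 x), <- (Hb1 y), E; auto).
  assert (Hbii : forall x y, bi x = bi y -> x = y) by (intros x y E; rewrite <- (Hb2 x), <- (Hb2 y), E; auto).
  assert (Has := mono_strict W _ Ham Hai).
  assert (Hais := mono_strict W _ Haim Haii).
  assert (Hbs := mono_strict W _ Hbm Hbi).
  assert (Hbis := mono_strict W _ Hbim Hbii).
  assert (Gai : gen2 alpha beta ai) by exact (gen2_inv _ _ _ _ (gen2_f _ _) Ha1 Ha2).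
  assert (Gbi : gen2 alpha beta bi) by exact (gen2_inv _ _ _ _ (gen2_g _ _) Hb1 Hb2).
  assert (Fex : exists f h, gen2 alpha beta f /\ mono W f /\ (forall x, h (f x) = x) /\
     (forall y, f (h y) = y) /\ f a = a /\ val (f b) < val b /\
     (forall x : pt W, val a < val x <= val b -> f x <> x)).
  { destruct (Rlt_or_le (val (alpha b)) (val b)) as [l|l].
    - exists alpha, ai; repeat split; auto using gen2_f.
    - exists ai, alpha; repeat split; auto.
      + rewrite <- Hfa at 1; auto.
      + assert (val b < val (alpha b)).
        { destruct (Rle_lt_or_eq_dec _ _ l) as [l'|e]; auto.
          exfalso; apply (HA b); [lra| apply pt_eq; auto]. }
        assert (K := Hais _ _ H). rewrite Ha1 in K; exact K.
      + intros x Hx E. apply (HA x Hx). rewrite <- E at 1. auto. }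
  destruct Fex as (f & h & Gf & Hfm & H1 & H2 & Hfa' & Hfb' & HA').
  assert (Gex : exists g, gen2 alpha beta g /\ mono W g /\ (forall x y, g x = g y -> x = y) /\
     g b = b /\ val a < val (g a)).
  { destruct (Rlt_or_le (val a) (val (beta a))) as [l|l].
    - exists beta; repeat split; auto using gen2_g.
    - exists bi; repeat split; auto.
      + rewrite <- Hfb at 1; auto.
      + assert (val (beta a) < val a).
        { destruct (Rle_lt_or_eq_dec _ _ l) as [l'|e]; auto.
          exfalso; apply (HB a); [lra| apply pt_eq; auto]. }
        assert (K := Hbis _ _ H). rewrite Hb1 in K; exact K. }
  destruct Gex as (g & Gg & Hgm & Hgi & Hgb & Hga).
  destruct (exists_n W HWc f h a b Hfm H1 H2 Hab Hfa' Hfb' HA' _ Hga) as [n Hn].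
  assert (Hfi : forall x y, f x = f y -> x = y) by (intros x y E; rewrite <- (H1 x), <- (H1 y), E; auto).
  exists (pw f n), g; split; [apply pw_gen2; auto|split; auto].
  apply (pingpong (fun x : pt W => val a <= val x <= val b) _ _ a).
  - apply pw_inj; auto.
  - auto.
  - simpl; lra.
  - intros x [Hx1 Hx2]. assert (K1 := pw_mono W f n Hfm _ _ Hx1). assert (K2 := pw_mono W f n Hfm _ _ Hx2).
    rewrite pw_fix in K1 by auto. assert (K3 := pw_le_b W f b n Hfm Hfb'). lra.
  - intros x [Hx1 Hx2]. assert (K1 := Hgm _ _ Hx1). assert (K2 := Hgm _ _ Hx2). rewrite Hgb in K2. lra.
  - intros x y [Hx1 Hx2] [Hy1 Hy2] E. assert (K2 := pw_mono W f n Hfm _ _ Hx2).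
    assert (K1 := Hgm _ _ Hy1). rewrite E in K2. lra.
Qed.
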